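(* Let $m,n,r$ be positive integers with $r<\min\{m,n\}$, $\mathcal{M}=\{X\in\mathbb{R}^{m\times n}:\operatorname{rank}X\le r\}$. For $X^*\in\mathcal{M}$ let $\mathcal{Y}_{X^*}\subset\mathbb{R}^{m\times r}\times\mathbb{R}^{r\times n}$ be the set of pairs $(B,C)$, where $B\in\mathbb{R}^{m\times r}$ has top $r\times r$ block equal to the identity $I_r$ and $C\in\mathbb{R}^{r\times n}$ is arbitrary, satisfying $$\sum_{i\in[m]}(b_i^\top c_j)^\ell=\sum_{i\in[m]}(x^*_{ij})^\ell\qquad\text{for all }\ell\in[m],\ j\in[n],$$ where $b_i^\top$ is the $i$-th row of $B$ and $c_j$ the $j$-th column of $C$. Then there exists a Zariski-open dense set $\mathcal{U}\subset\mathcal{M}$ such that for every $X^*\in\mathcal{U}$ and every $\Pi\in\mathcal{P}_m$, the matrix $\Pi X^*$ has a unique factorization $\Pi X^*=B^*_\Pi C^*_\Pi$ with $B^*_\Pi\in\mathbb{R}^{m\times r}$ having top $r\times r$ block $I_r$ and $C^*_\Pi\in\mathbb{R}^{r\times n}$, and $$\mathcal{Y}_{X^*}=\{(B^*_\Pi,C^*_\Pi):\Pi\in\mathcal{P}_m\}.$$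
   Context: $\mathcal{P}_m$ denotes the set of $m\times m$ permutation matrices; $[k]=\{1,\dots,k\}$. $\mathcal{M}$ carries the Zariski topology. Note that the right-hand sides $\sum_i (x^*_{ij})^\ell$ coincide with $\sum_i\tilde x_{ij}^\ell$ for $\tilde X=[\tilde\Pi_1x_1^*\cdots\tilde\Pi_nx_n^*]$ with arbitrary permutations $\tilde\Pi_j$, so $\mathcal{Y}_{X^*}$ can be computed from such permuted data. *)

(* Defs.v *)
From HB Require Import structures.
From mathcomp Require Import all_boot all_order all_algebra all_fingroup.
From mathcomp Require Import reals.
From mathcomp Require Import mpoly.
Set Implicit Arguments. Unset Strict Implicit. Unset Printing Implicit Defensive.
Import Order.TTheory GRing.Theory Num.Theory.
Local Open Scope ring_scope.

Definition mx_eval (R : realType) (m n : nat) (p : {mpoly R[m * n]})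
  (X : 'M[R]_(m, n)) : R := p.@[fun k => mxvec X 0 k].

Definition lowrank (R : realType) (m n r : nat) (X : 'M[R]_(m, n)) : Prop :=
  (\rank X <= r)%N.

(* U is Zariski-open in M: U = M minus the common zero set of a family S
   of polynomials. *)
Definition zariski_open_in (R : realType) (m n : nat)
  (M U : 'M[R]_(m, n) -> Prop) : Prop :=
  exists S : {mpoly R[m * n]} -> Prop,
    forall X, U X <-> (M X /\ exists p, S p /\ mx_eval p X <> 0).

(* U is Zariski-dense in M: every polynomial vanishing on U vanishes on M
   (i.e. the Zariski closure of U contains M). *)
Definition zariski_dense_in (R : realType) (m n : nat)
  (M U : 'M[R]_(m, n) -> Prop) : Prop :=
  forall p : {mpoly R[m * n]},
    (forall X, U X -> mx_eval p X = 0) -> forall X, M X -> mx_eval p X = 0.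

Definition top_id (R : realType) (m r : nat) (B : 'M[R]_(m, r)) : Prop :=
  forall (i : 'I_m) (j : 'I_r), (i < r)%N -> B i j = ((i : nat) == j)%:R.

Definition Yset (R : realType) (m n r : nat) (X : 'M[R]_(m, n))
  (B : 'M[R]_(m, r)) (C : 'M[R]_(r, n)) : Prop :=
  top_id B /\
  forall (l : nat) (j : 'I_n), (1 <= l <= m)%N ->
    \sum_(i < m) ((B *m C) i j) ^+ l = \sum_(i < m) (X i j) ^+ l.

(* Main.v *)
Require Import Defs.
From HB Require Import structures.
From mathcomp Require Import all_boot all_order all_algebra all_fingroup.
From mathcomp Require Import reals.
From mathcomp Require Import mpoly.
From mathcomp Require Import ring lra zify.
Set Implicit Arguments. Unset Strict Implicit. Unset Printing Implicit Defensive.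
Import Order.TTheory GRing.Theory Num.Theory.
Local Open Scope ring_scope.


Lemma poly_nz_roots0 (R : realType) (p : {poly R}) :
  (forall x : R, x != 0 -> p.[x] = 0) -> p = 0.
Proof.
move=> H; apply: (@roots_geq_poly_eq0 _ p [seq (i.+1)%:R | i <- iota 0 (size p)]).
- apply/allP => x /mapP [i _ ->]; apply/eqP; apply: H.
  by rewrite pnatr_eq0.
- rewrite map_inj_uniq ?iota_uniq // => i j /eqP; rewrite eqr_nat eqSS.
  by move/eqP.
- by rewrite size_map size_iota.
Qed.

Definition Ep (R : realType) (s : seq R) : {poly R} := \prod_(x <- s) (1 - x *: 'X).
Definition Tp (R : realType) (k : nat) (s : seq R) : {poly R} :=
  \sum_(x <- s) x%:P * \sum_(l < k) (x *: 'X) ^+ l.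

Lemma EpT (R : realType) (k : nat) (s : seq R) :
  exists Q, (Ep s)^`() + Ep s * Tp k s = 'X^k * Q.
Proof.
elim: s => [|x s [Q IH]].
  by exists 0; rewrite /Ep /Tp !big_nil -polyC1 derivC mulr0 addr0 mulr0.
exists ((1 - x *: 'X) * Q - x ^+ k.+1 *: Ep s).
rewrite /Ep /Tp !big_cons /= -/(Ep s) -/(Tp k s) derivM derivB derivC derivZ derivX.
have G : (1 - x *: 'X) * (\sum_(l < k) (x *: 'X) ^+ l) = 1 - 'X^k * (x ^+ k)%:P.
  rewrite -!mul_polyC.
  have E := subrX1 (x%:P * 'X : {poly R}) k.
  rewrite exprMn -rmorphXn /= in E.
  apply: (@oppr_inj _); rewrite opprB -mulNr opprB -E; ring.
rewrite mulrDr.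
set P := \sum_(l < k) _ in G *.
have -> : (1 - x *: 'X) * Ep s * (x%:P * P) = x%:P * Ep s * ((1 - x *: 'X) * P).
  by ring.
rewrite G.
have -> : (0 - x *: 1) * Ep s + (1 - x *: 'X) * (Ep s)^`() +
  (x%:P * Ep s * (1 - 'X^k * (x ^+ k)%:P) + (1 - x *: 'X) * Ep s * Tp k s) =
  (1 - x *: 'X) * ((Ep s)^`() + Ep s * Tp k s) - x ^+ k.+1 *: ('X^k * Ep s).
  rewrite -!mul_polyC exprS rmorphM /= mulr1 sub0r; ring.
by rewrite IH mulrBr mulrCA scalerAr.
Qed.

Lemma size_Ep (R : realType) (s : seq R) : (size (Ep s) <= (size s).+1)%N.
Proof.
elim: s => [|x s IH]; first by rewrite /Ep big_nil size_poly1.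
rewrite /Ep big_cons -/(Ep s) /=.
apply: (leq_trans (size_polyMleq _ _)).
have h1 : (size ((1 - x *: 'X)%R : {poly R}) <= 2)%N.
  by apply: (leq_trans (size_polyD _ _)); rewrite size_poly1 geq_max /=;
     rewrite size_polyN; apply: (leq_trans (size_scale_leq _ _)); rewrite size_polyX.
have := leq_add h1 IH; lia.
Qed.

Lemma Ep_coef0 (R : realType) (s : seq R) : (Ep s)`_0 = 1.
Proof.
elim: s => [|x s IH]; first by rewrite /Ep big_nil coef1.
rewrite /Ep big_cons -/(Ep s) coef0M IH mulr1 coefB coef1 coefZ coefX /=.
by rewrite mulr0 subr0.
Qed.

Lemma Ep_uniq (R : realType) (k : nat) (s t : seq R) :
  (size s <= k)%N -> (size t <= k)%N -> Tp k s = Tp k t -> Ep s = Ep t.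
Proof.
move=> hs ht hT.
have [Q1 E1] := EpT k s; have [Q2 E2] := EpT k t.
set D := Ep s - Ep t.
have ED : D^`() + D * Tp k s = 'X^k * (Q1 - Q2).
  rewrite /D mulrBr -E1 -E2 -hT derivB mulrBl.
  by rewrite opprD addrACA.
have hz : forall j, (j <= k)%N -> forall i, (i <= j)%N -> D`_i = 0.
  elim=> [_ i|j IH hj i].
    by rewrite leqn0 => /eqP ->; rewrite /D coefB !Ep_coef0 subrr.
  rewrite leq_eqVlt => /orP [/eqP ->|]; last by rewrite ltnS; apply: IH; apply: ltnW.
  have := congr1 (fun p : {poly R} => p`_j) ED.
  rewrite coefD coef_deriv coefM coefXnM hj /=.
  rewrite big1 ?addr0; last first.
    move=> i0 _; rewrite IH ?mul0r ?(ltnW hj) // -ltnS; exact: ltn_ord.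
  by move/eqP; rewrite mulrn_eq0 /= => /eqP.

suff hD : D = 0 by move: hD; rewrite /D; apply: subr0_eq.
apply/polyP => i; rewrite coef0.
case: (leqP i k) => hi; first by apply: (hz k).
apply: nth_default; apply: (leq_trans (size_polyD _ _)).
rewrite size_polyN geq_max; apply/andP; split; apply: (leq_trans (size_Ep _)).
  by apply: (leq_trans _ hi); rewrite ltnS.
by apply: (leq_trans _ hi); rewrite ltnS.
Qed.

Lemma Ep_rev (R : realType) (s : seq R) (w : R) : w != 0 ->
  (\prod_(x <- s) ('X - x%:P)).[w] = w ^+ size s * (Ep s).[w^-1].
Proof.
move=> hw; elim: s => [|x s IH]; first by rewrite /Ep !big_nil /= expr0 mul1r !hornerE.
rewrite /Ep !big_cons -/(Ep s) !hornerM IH /= exprS.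
rewrite hornerXsubC hornerD hornerN hornerZ hornerX -polyC1 hornerC.
set E := (Ep s).[_]; set z := w ^+ _.
by field.
Qed.

Lemma Ep_perm (R : realType) (s t : seq R) :
  size s = size t -> Ep s = Ep t -> perm_eq s t.
Proof.
move=> hst hE; apply: prod_XsubC_eq; apply/eqP; rewrite -subr_eq0; apply/eqP.
apply: poly_nz_roots0 => w hw.
by rewrite hornerD hornerN !Ep_rev // hst hE subrr.
Qed.

Lemma ps_perm (R : realType) (m : nat) (a b : 'I_m -> R) :
  (forall l, (1 <= l <= m)%N -> \sum_i a i ^+ l = \sum_i b i ^+ l) ->
  exists s : 'S_m, forall i, b i = a (s i).
Proof.
move=> H.
set sa := [tuple a i | i < m]; set sb := [seq b i | i <- enum 'I_m].
have hT : Tp m sa = Tp m sb.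
  rewrite /Tp.
  have E : forall s : seq R, \sum_(x <- s) x%:P * \sum_(l < m) (x *: 'X) ^+ l =
      \sum_(l < m) (\sum_(x <- s) x ^+ l.+1) *: 'X^l.
    move=> s; rewrite (eq_bigr (fun x => \sum_(l < m) (x ^+ l.+1) *: 'X^l)).
      by rewrite exchange_big /=; apply: eq_bigr => l _; rewrite scaler_suml.
    move=> x _; rewrite mulr_sumr; apply: eq_bigr => l _.
    by rewrite exprZn mul_polyC scalerA -exprS.
  rewrite !E; apply: eq_bigr => l _; congr (_ *: _).
  rewrite /sa /sb /= !big_map; move: (H l.+1); rewrite [index_enum _]unlock; apply.
  by rewrite /= ltn_ord.
have hs : size sb = m by rewrite size_map size_enum_ord.
have := Ep_uniq (eq_leq (size_tuple sa)) (eq_leq hs) hT.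
move/Ep_perm; rewrite size_tuple hs => /(_ erefl) hp.
have /tuple_permP [p hp'] : perm_eq sb sa by rewrite perm_sym.
exists p => i.
have := congr1 (fun s : seq R => nth 0 s i) hp'.
rewrite /sb (nth_map i) ?size_enum_ord // nth_ord_enum => ->.
by rewrite /= (nth_map i) ?size_enum_ord // nth_ord_enum tnth_map tnth_ord_tuple.
Qed.


Definition Xp (A : Type) (m n : nat) (sg : {ffun 'I_n -> 'S_m}) (X : 'M[A]_(m, n)) :
  'M[A]_(m, n) := \matrix_(i, j) X (sg j i) j.

Definition minorsq (A : comRingType) (m n k : nat) (Y : 'M[A]_(m, n)) : A :=
  \sum_(f : {ffun 'I_k -> 'I_m}) \sum_(g : {ffun 'I_k -> 'I_n})
     (\det (mxsub f g Y)) ^+ 2.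

Definition rowsq (A : comRingType) (m n k : nat) (f : {ffun 'I_k -> 'I_m})
  (Y : 'M[A]_(m, n)) : A :=
  \sum_(g : {ffun 'I_k -> 'I_n}) (\det (mxsub f g Y)) ^+ 2.

Lemma minorsq_map (A B : comRingType) (phi : {rmorphism A -> B}) m n k (Y : 'M[A]_(m, n)) :
  minorsq k (map_mx phi Y) = phi (minorsq k Y).
Proof.
rewrite /minorsq rmorph_sum; apply: eq_bigr => f _; rewrite rmorph_sum.
apply: eq_bigr => g _; rewrite rmorphXn /= -det_map_mx; congr (_ ^+ _); congr (\det _).
by apply/matrixP => i j; rewrite !mxE.
Qed.

Lemma rowsq_map (A B : comRingType) (phi : {rmorphism A -> B}) m n k f (Y : 'M[A]_(m, n)) :
  @rowsq _ m n k f (map_mx phi Y) = phi (@rowsq _ m n k f Y).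
Proof.
rewrite /rowsq rmorph_sum; apply: eq_bigr => g _.
rewrite rmorphXn /= -det_map_mx; congr (_ ^+ _); congr (\det _).
by apply/matrixP => i j; rewrite !mxE.
Qed.

Lemma Xp_map (A B : Type) (phi : A -> B) m n sg (Y : 'M[A]_(m, n)) :
  Xp sg (map_mx phi Y) = map_mx phi (Xp sg Y).
Proof. by apply/matrixP => i j; rewrite !mxE. Qed.

Definition XV (R : realType) (m n : nat) : 'M[{mpoly R[m * n]}]_(m, n) :=
  \matrix_(i, j) 'X_(mxvec_index i j).

Lemma XV_eval (R : realType) m n (X : 'M[R]_(m, n)) :
  map_mx (meval (fun k => mxvec X 0 k)) (XV R m n) = X.
Proof. by apply/matrixP => i j; rewrite !mxE mevalXU mxvecE. Qed.

Lemma mx_eval_rm (R : realType) m n (X : 'M[R]_(m, n)) (F : forall A : comRingType, 'M[A]_(m, n) -> A) :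
  (forall (A B : comRingType) (phi : {rmorphism A -> B}) (Y : 'M[A]_(m, n)),
      F B (map_mx phi Y) = phi (F A Y)) ->
  mx_eval (F _ (XV R m n)) X = F _ X.
Proof.
move=> HF; rewrite /mx_eval.
have -> : (F _ (XV R m n)).@[fun k => mxvec X 0 k] =
   (meval (fun k => mxvec X 0 k) : {rmorphism _ -> R}) (F _ (XV R m n)) by [].
by rewrite -HF XV_eval.
Qed.

Lemma mx_evalM (R : realType) m n (p q : {mpoly R[m * n]}) (X : 'M[R]_(m, n)) :
  mx_eval (p * q) X = mx_eval p X * mx_eval q X.
Proof. by rewrite /mx_eval mevalM. Qed.

Lemma mx_eval1 (R : realType) m n (X : 'M[R]_(m, n)) :
  mx_eval (1 : {mpoly R[m * n]}) X = 1.
Proof. by rewrite /mx_eval meval1. Qed.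


Lemma lowrank_fact (R : realType) m n r (A : 'M[R]_(m, n)) :
  lowrank r A -> exists (B : 'M[R]_(m, r)) (C : 'M[R]_(r, n)), A = B *m C.
Proof.
rewrite /lowrank => hr.
exists (col_ebase A *m (pid_mx (\rank A) : 'M_(m, r))).
exists ((pid_mx (\rank A) : 'M_(r, n)) *m row_ebase A).
rewrite mulmxA -[col_ebase A *m _ *m _]mulmxA mul_pid_mx minnn.
by rewrite (minn_idPr hr) mulmx_ebase.
Qed.

Lemma lowrank_mul (R : realType) m n r (B : 'M[R]_(m, r)) (C : 'M[R]_(r, n)) :
  lowrank r (B *m C).
Proof. by rewrite /lowrank (leq_trans (mxrankM_maxl _ _)) // rank_leq_col. Qed.

Lemma mmap_horner (R : realType) N (h : 'I_N -> {poly R}) (q : {mpoly R[N]}) t :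
  (mmap polyC h q).[t] = q.@[fun k => (h k).[t]].
Proof.
rewrite /meval /mmap -[LHS]/(horner_eval t _) rmorph_sum /=.
apply: eq_bigr => mm _; rewrite rmorphM /= /horner_eval hornerC.
congr (_ * _); rewrite /mmap1 -[LHS]/(horner_eval t _) rmorph_prod /=.
by apply: eq_bigr => i _; rewrite rmorphXn.
Qed.

Definition good (R : realType) m n r (p : {mpoly R[m * n]}) : Prop :=
  forall q : {mpoly R[m * n]},
    (forall X, @lowrank R m n r X -> mx_eval p X * mx_eval q X = 0) ->
    forall X, @lowrank R m n r X -> mx_eval q X = 0.

Lemma good1 (R : realType) m n r : @good R m n r 1.
Proof. by move=> q H X hX; have := H X hX; rewrite mx_eval1 mul1r. Qed.

Lemma goodM (R : realType) m n r p1 p2 :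
  @good R m n r p1 -> @good R m n r p2 -> @good R m n r (p1 * p2).
Proof.
move=> g1 g2 q H; apply: g2 => X hX; rewrite -mx_evalM.
apply: (g1 (p2 * q)) => // Y hY; rewrite mx_evalM mulrA -mx_evalM; exact: H.
Qed.

Lemma good_wit (R : realType) m n r (p : {mpoly R[m * n]}) (W : 'M[R]_(m, n)) :
  lowrank r W -> mx_eval p W != 0 -> @good R m n r p.
Proof.
move=> hW pW q H X0 hX0.
have [B1 [C1 E1]] := lowrank_fact hW.
have [B0 [C0 E0]] := lowrank_fact hX0.
pose BP : 'M[{poly R}]_(m, r) := \matrix_(i, j) ((B0 i j)%:P + 'X * (B1 i j - B0 i j)%:P).
pose CP : 'M[{poly R}]_(r, n) := \matrix_(i, j) ((C0 i j)%:P + 'X * (C1 i j - C0 i j)%:P).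
pose Bt (t : R) : 'M[R]_(m, r) := \matrix_(i, j) (B0 i j + t * (B1 i j - B0 i j)).
pose Ct (t : R) : 'M[R]_(r, n) := \matrix_(i, j) (C0 i j + t * (C1 i j - C0 i j)).
pose XP := BP *m CP.
have EXP : forall t k, (mxvec XP 0 k).[t] = mxvec (Bt t *m Ct t) 0 k.
  move=> t k; case/mxvec_indexP: k => i j; rewrite !mxvecE !mxE.
  rewrite horner_sum; apply: eq_bigr => l _.
  by rewrite hornerM !mxE !hornerE.
pose phi (s : {mpoly R[m * n]}) := mmap polyC (fun k => mxvec XP 0 k) s.
have Ephi : forall s t, (phi s).[t] = mx_eval s (Bt t *m Ct t).
  by move=> s t; rewrite mmap_horner /mx_eval; apply: meval_eq => k; rewrite EXP.
have B1E : Bt 1 = B1 by apply/matrixP => i j; rewrite !mxE mul1r addrC subrK.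
have C1E : Ct 1 = C1 by apply/matrixP => i j; rewrite !mxE mul1r addrC subrK.
have B0E : Bt 0 = B0 by apply/matrixP => i j; rewrite !mxE mul0r addr0.
have C0E : Ct 0 = C0 by apply/matrixP => i j; rewrite !mxE mul0r addr0.
have hprod : phi p * phi q = 0.
  apply: poly_nz_roots0 => t _; rewrite hornerM !Ephi; apply: H; exact: lowrank_mul.
have hp : phi p != 0.
  apply/negP => /eqP h0; move: pW; rewrite E1 -B1E -C1E -Ephi h0 horner0 eqxx.
  by [].
have hq : phi q = 0.
  by move/eqP: hprod; rewrite mulf_eq0 (negbTE hp) /= => /eqP.
by rewrite E0 -B0E -C0E -Ephi hq horner0.
Qed.


Lemma sum_pos (R : realType) (I : finType) (G : I -> R) i0 :
  (forall i, 0 <= G i) -> 0 < G i0 -> 0 < \sum_i G i.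
Proof.
move=> h0 h1; rewrite (bigD1 i0) //=.
have : 0 <= \sum_(i | i != i0) G i by apply: sumr_ge0 => i _.
lra.
Qed.

Lemma sq_pos (R : realType) (x : R) : x != 0 -> 0 < x ^+ 2.
Proof. by move=> hx; rewrite exprn_even_gt0. Qed.

Lemma rowsq_wit (R : realType) m n r (f : {ffun 'I_r -> 'I_m}) :
  injective f -> (r <= n)%N ->
  exists W : 'M[R]_(m, n), lowrank r W /\ @rowsq _ m n r f W != 0.
Proof.
move=> finj hrn.
pose Bw : 'M[R]_(m, r) := \matrix_(i, c) (i == f c)%:R.
pose Cw : 'M[R]_(r, n) := \matrix_(c, j) ((c : nat) == j)%:R.
exists (Bw *m Cw); split; first exact: lowrank_mul.
pose g0 : {ffun 'I_r -> 'I_n} := [ffun c => widen_ord hrn c].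
have E : mxsub f g0 (Bw *m Cw) = 1%:M.
  apply/matrixP => a b; rewrite !mxE (bigD1 a) //= !mxE eqxx mul1r big1 ?addr0.
    by rewrite ffunE /= val_eqE.
  by move=> c hc; rewrite !mxE (inj_eq finj) eq_sym (negbTE hc) mul0r.
apply/lt0r_neq0; rewrite /rowsq (@sum_pos _ _ _ g0) //.
  by move=> g; exact: sqr_ge0.
by rewrite E det1 expr1n ltr01.
Qed.

Lemma perm2 N (z0 z1 u v : 'I_N) : z0 != z1 -> u != v ->
  exists p : 'S_N, p z0 = u /\ p z1 = v.
Proof.
move=> hz huv.
pose p1 := tperm z0 u.
have hw : p1 z1 != u.
  by rewrite -[X in _ != X](tpermL z0 u) (inj_eq perm_inj) eq_sym.
exists (p1 * tperm (p1 z1) v)%g; rewrite !permM tpermL; split.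
  by rewrite tpermD // eq_sym.
by rewrite tpermL.
Qed.


Lemma gS_wit (R : realType) m n r (sg : {ffun 'I_n -> 'S_m}) :
  (0 < r)%N -> (r < minn m n)%N -> (exists j k, sg j != sg k) ->
  exists W : 'M[R]_(m, n), lowrank r W /\ minorsq r.+1 (Xp sg W) != 0.
Proof.
move=> hr; rewrite leq_min => /andP [hm hn] [j [k hjk]].
have hjk' : j != k by apply: contraNneq hjk => ->.
have [a ha] : exists a, ((sg j)^-1)%g a != ((sg k)^-1)%g a.
  apply/existsP; apply: contraNT hjk; rewrite negb_exists => /forallP h.
  apply/eqP; apply: (@invg_inj _ _ _); apply/permP => x.
  by have := h x; rewrite negbK => /eqP.
pose yj := ((sg j)^-1)%g a; pose yk := ((sg k)^-1)%g a.
pose z0 : 'I_r.+1 := ord0; pose z1 : 'I_r.+1 := lift ord0 (Ordinal hr).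
have hz : z0 != z1 by rewrite -val_eqE.
have hz' : forall (N : nat) (h : (r.+1 <= N)%N), widen_ord h z0 != widen_ord h z1.
  by move=> N h; rewrite -val_eqE /=.
have [pc [pc0 pc1]] := perm2 (hz' n hn) hjk'.
have [py [py0 py1]] := perm2 (hz' m hm) ha.
pose colf (i : 'I_r.+1) := pc (widen_ord hn i).
pose yf (i : 'I_r.+1) := py (widen_ord hm i).
have colf_inj : injective colf.
  by move=> x y /perm_inj /(congr1 val) /= /val_inj.
have yf_inj : injective yf.
  by move=> x y /perm_inj /(congr1 val) /= /val_inj.
pose c0 : 'I_r := Ordinal hr.
pose grp (i0 : 'I_r.+1) := odflt c0 (unlift ord0 i0).
pose aa (c : 'I_r) := sg (colf (lift ord0 c)) (yf (lift ord0 c)).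
pose Bw : 'M[R]_(m, r) := \matrix_(i, c) (i == aa c)%:R.
pose Cw : 'M[R]_(r, n) := \matrix_(c, jj) [exists i0, (colf i0 == jj) && (grp i0 == c)]%:R.
exists (Bw *m Cw); split; first exact: lowrank_mul.
have Haa : forall i0, aa (grp i0) = sg (colf i0) (yf i0).
  move=> i0; case: (unliftP ord0 i0) => [c ->|->].
    by rewrite /grp liftK.
  rewrite /grp unlift_none /= /aa.
  have -> : lift ord0 c0 = z1 by [].
  rewrite /colf /yf -/z0 pc0 pc1 py0 py1 /yj /yk !permKV.
  by [].
have HW : forall i0 i, (Bw *m Cw) i (colf i0) = (i == sg (colf i0) (yf i0))%:R.
  move=> i0 i; rewrite !mxE (bigD1 (grp i0)) //= !mxE big1 ?addr0.
    rewrite Haa; suff -> : [exists i1, (colf i1 == colf i0) && (grp i1 == grp i0)] by rewrite mulr1.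
    apply/existsP; exists i0.
    by rewrite !eqxx.
  move=> c hc; rewrite !mxE; case: existsP; last by rewrite mulr0.
  move=> [i1 /andP [/eqP /colf_inj -> /eqP hc']].
  by move: hc; rewrite hc' eqxx.
have E : mxsub [ffun i => yf i] [ffun i => colf i] (Xp sg (Bw *m Cw)) = 1%:M.
  apply/matrixP => x y; rewrite mxE !ffunE mxE HW (inj_eq perm_inj) (inj_eq yf_inj) mxE.
  by [].
apply/lt0r_neq0; rewrite /minorsq (@sum_pos _ _ _ [ffun i => yf i]) //.
  by move=> f; apply: sumr_ge0 => g _; exact: sqr_ge0.
rewrite (@sum_pos _ _ _ [ffun i => colf i]) //.
  by move=> g; exact: sqr_ge0.
by rewrite E det1 expr1n ltr01.
Qed.


Lemma det_thin (R : realType) k (A : 'M[R]_(k.+1, k)) (B : 'M[R]_(k, k.+1)) :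
  \det (A *m B) = 0.
Proof.
apply/eqP; apply: contraT => h.
have : A *m B \in unitmx by rewrite unitmxE unitfE.
move/mxrank_unit => e.
have := mxrankM_maxl A B; rewrite e => h'.
have := rank_leq_col A; lia.
Qed.

Lemma minorsq_low (R : realType) m n r (B : 'M[R]_(m, r)) (C : 'M[R]_(r, n)) :
  minorsq r.+1 (B *m C) = 0.
Proof.
rewrite /minorsq big1 // => f _; rewrite big1 // => g _.
by rewrite mxsub_mul det_thin expr0n.
Qed.

Lemma colsub_mul1 (R : realType) a b c (g : 'I_c -> 'I_b) (T : 'M[R]_(a, b)) :
  colsub g T = T *m colsub g 1%:M.
Proof.
apply/matrixP => i j; rewrite !mxE (bigD1 (g j)) //= !mxE eqxx mulr1 big1 ?addr0 //.
by move=> k hk; rewrite !mxE (negbTE hk) mulr0.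
Qed.

Lemma permX_entry (R : realType) m n (s : 'S_m) (X : 'M[R]_(m, n)) i j :
  (perm_mx s *m X) i j = X (s i) j.
Proof. by rewrite -row_permE mxE. Qed.


Definition badsg m n (sg : {ffun 'I_n -> 'S_m}) : bool := [exists j, exists k, sg j != sg k].

Definition Gall (A : comRingType) m n r (Y : 'M[A]_(m, n)) : A :=
  \prod_(sg : {ffun 'I_n -> 'S_m} | badsg sg) minorsq r.+1 (Xp sg Y).

Definition Hall (A : comRingType) m n r (Y : 'M[A]_(m, n)) : A :=
  \prod_(f : {ffun 'I_r -> 'I_m} | injectiveb f) @rowsq _ m n r f Y.

Definition Ppoly (R : realType) m n r : {mpoly R[m * n]} :=
  Gall r (XV R m n) * Hall r (XV R m n).

Lemma Ppoly_eval (R : realType) m n r (X : 'M[R]_(m, n)) :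
  mx_eval (Ppoly R m n r) X = Gall r X * Hall r X.
Proof.
rewrite /Ppoly mx_evalM.
rewrite (@mx_eval_rm R m n X (fun A Y => Gall r Y)).
  rewrite (@mx_eval_rm R m n X (fun A Y => Hall r Y)) //.
  move=> A B phi Y; rewrite /Hall rmorph_prod; apply: eq_bigr => f _.
  exact: rowsq_map.
move=> A B phi Y; rewrite /Gall rmorph_prod; apply: eq_bigr => sg _.
by rewrite Xp_map minorsq_map.
Qed.

Lemma Ppoly_good (R : realType) m n r : (0 < r)%N -> (r < minn m n)%N ->
  @good R m n r (Ppoly R m n r).
Proof.
move=> hr hmn; have := hmn; rewrite leq_min => /andP [hm hn].
apply: goodM.
  rewrite /Gall; apply: (big_ind (@good R m n r)); [exact: good1 | exact: goodM|].
  move=> sg hsg.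
  have [W [hW hWn]] : exists W : 'M[R]_(m, n), lowrank r W /\ minorsq r.+1 (Xp sg W) != 0.
    apply: gS_wit => //.
    by move/existsP: hsg => [j /existsP [k h]]; exists j, k.
  apply: (good_wit hW).
  rewrite (@mx_eval_rm R m n W (fun A Y => minorsq r.+1 (Xp sg Y))) //.
  by move=> A B phi Y; rewrite Xp_map minorsq_map.
rewrite /Hall; apply: (big_ind (@good R m n r)); [exact: good1 | exact: goodM|].
move=> f /injectiveP hf.
have [W [hW hWn]] := @rowsq_wit R m n r f hf (ltnW hn).
apply: (good_wit hW).
rewrite (@mx_eval_rm R m n W (fun A Y => @rowsq A m n r f Y)) //.
by move=> A B phi Y; rewrite rowsq_map.
Qed.


Lemma top_rows_free (R : realType) m n r (X : 'M[R]_(m, n)) (hm : (r <= m)%N) (s : 'S_m) :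
  Hall r X != 0 ->
  row_free (rowsub (widen_ord hm) (perm_mx s *m X)).
Proof.
move=> /prodf_neq0 hH.
set T := rowsub _ _.
pose f : {ffun 'I_r -> 'I_m} := [ffun c => s (widen_ord hm c)].
have finj : injectiveb f.
  apply/injectiveP => x y; rewrite !ffunE => /perm_inj h; apply: val_inj; exact: (congr1 val h).
have hf := hH f finj; rewrite /rowsq in hf.
have [g hg] : exists g : {ffun 'I_r -> 'I_n}, \det (mxsub f g X) != 0.
  case: (boolP [exists g : {ffun 'I_r -> 'I_n}, \det (mxsub f g X) != 0]) => [/existsP //|/existsPn hz].
  exfalso; move/negP: hf; apply; apply/eqP.
  by apply: big1 => g _; rewrite (eqP (negbNE (hz g))) expr0n.
have E : mxsub f g X = colsub g T.
  by apply/matrixP => i j; rewrite [LHS]mxE ffunE [RHS]mxE /T [rowsub _ _ _ _]mxE permX_entry.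
rewrite /row_free eqn_leq rank_leq_row /=.
have : (colsub g T) \in unitmx by rewrite -E unitmxE unitfE.
move/mxrank_unit => e; rewrite -{1}e colsub_mul1; exact: mxrankM_maxl.
Qed.

Unset Implicit Arguments.

Theorem theorem2 (R : realType) (m n r : nat) :
  (0 < r)%N -> (r < minn m n)%N ->
  exists U : 'M[R]_(m, n) -> Prop,
    zariski_open_in (@lowrank R m n r) U /\
    zariski_dense_in (@lowrank R m n r) U /\
    forall X : 'M[R]_(m, n), U X ->
      (forall s : 'S_m,
         exists BC : 'M[R]_(m, r) * 'M[R]_(r, n),
           (top_id BC.1 /\ perm_mx s *m X = BC.1 *m BC.2) /\
           forall B C, top_id B -> perm_mx s *m X = B *m C -> (B, C) = BC) /\
      (forall (B : 'M[R]_(m, r)) (C : 'M[R]_(r, n)),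
         Yset X B C <->
         exists s : 'S_m, top_id B /\ perm_mx s *m X = B *m C).
Proof.
move=> hr hmn; have := hmn; rewrite leq_min => /andP [hm hn].
exists (fun X => lowrank r X /\ mx_eval (Ppoly R m n r) X <> 0).
split.
  exists (fun p => p = Ppoly R m n r) => X; split.
    by move=> [h1 h2]; split => //; exists (Ppoly R m n r).
  by move=> [h1 [p [-> h2]]].
split.
  move=> q Hq X hX; apply: (Ppoly_good hr hmn) => // Y hY.
  case: (eqVneq (mx_eval (Ppoly R m n r) Y) 0) => [->|h]; first by rewrite mul0r.
  by rewrite Hq ?mulr0 //; split => //; apply/eqP.
move=> X [hX]; rewrite Ppoly_eval => /eqP; rewrite mulf_eq0 negb_or => /andP [hG hH].
have hm' : (r <= m)%N by apply: ltnW.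
split.
  move=> s.
  set Y := perm_mx s *m X.
  set T := rowsub (widen_ord hm') Y.
  have hT : row_free T by apply: top_rows_free.
  have sTY : (T <= Y)%MS by rewrite /T rowsubE submxMl.
  have sYT : (Y <= T)%MS.
    have := mxrank_leqif_sup sTY; case=> h1 <-.
    rewrite eqn_leq h1 /= (eqP hT).
    by rewrite (leq_trans (mxrankM_maxr _ _)).
  have hYB : Y = (Y *m pinvmx T) *m T by rewrite mulmxKpV.
  have topB : forall B' : 'M[R]_(m, r), top_id B' -> rowsub (widen_ord hm') B' = 1%:M.
    move=> B' hB'; apply/matrixP => i j; rewrite !mxE hB' //= ltn_ord //.
  exists (Y *m pinvmx T, T); split.
    split => //=.
    move=> i j hi.
    have hB1 : rowsub (widen_ord hm') (Y *m pinvmx T) = 1%:M.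
      apply: (row_free_inj hT); rewrite mul1mx mul_rowsub_mx -hYB //.
    have := congr1 (fun M : 'M[R]_(r, r) => M (Ordinal hi) j) hB1; rewrite !mxE /=.
    have -> : widen_ord hm' (Ordinal hi) = i by apply: val_inj.
    by [].
  move=> B C hB hBC.
  have hC : C = T by rewrite /T hBC -mul_rowsub_mx topB // mul1mx.
  rewrite hC; congr (_, _); apply: (row_free_inj hT).
  by rewrite /= -hYB -hC hBC.
move=> B C; split.
  move=> [htop hsum].
  have Hj : forall j : 'I_n, exists s : 'S_m, [forall i, (B *m C) i j == X (s i) j].
    move=> j.
    have [s hs] := @ps_perm R m (fun i => X i j) (fun i => (B *m C) i j)
      (fun l hl => esym (hsum l j hl)).
    by exists s; apply/forallP => i; rewrite hs.
  pose sg : {ffun 'I_n -> 'S_m} := [ffun j => xchoose (Hj j)].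
  have BCE : B *m C = Xp sg X.
    apply/matrixP => i j; rewrite [RHS]mxE ffunE.
    by have /forallP /(_ i) /eqP := xchooseP (Hj j).
  have nb : ~~ badsg sg.
    apply/negP => hb; move/prodf_neq0: hG => /(_ sg hb).
    by rewrite -BCE minorsq_low eqxx.
  have j0 : 'I_n by exists 0%N; apply: (leq_ltn_trans (leq0n r) hn).
  exists (sg j0); split => //.
  rewrite BCE; apply/matrixP => i j; rewrite permX_entry mxE.
  move: nb; rewrite /badsg negb_exists => /forallP /(_ j0).
  by rewrite negb_exists => /forallP /(_ j); rewrite negbK => /eqP ->.
move=> [s [htop hE]]; split => // l j _.
rewrite -hE; under eq_bigr do rewrite permX_entry.
by rewrite [RHS](reindex_inj (@perm_inj _ s)).
Qed.
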